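(* Let $S$ be a qubit with Hamiltonian $H_S=E|1\rangle\langle 1|$, $E>0$, and let $\beta>0$. Assume the initial state of $S$ is diagonal in the energy eigenbasis with $p^{(0)}_0\ge p^{(0)}_1$. Then the optimal cooling protocol in $\mathcal{P}_\emptyset$ (maximizing the ground state population $p_0^{(k)}$ after every number $k$ of rounds) is the one in which in each round (1) the Pauli $X$ unitary is applied to $S$ and (2) the $\beta$-swap $\Lambda_\beta$ is applied to $S$. The ground state population after round $k$ is $p^{(k)}_0=1-e^{-k\beta E}(1-p^{(0)}_0)$, and $p^{(k)}_0\to1$ as $k\to\infty$.
   Context: A dephasing thermalization on $S$ is a quantum channel $\Lambda$ with $\Lambda(\tau_S)=\tau_S$, where $\tau_S=e^{-\beta H_S}/\mathrm{tr}[e^{-\beta H_S}]$, and $\langle 0|\Lambda(\rho)|1\rangle=0$ for all $\rho$. The protocol class $\mathcal{P}_\emptyset$ (no auxiliary systems): each round $k$ consists of an arbitrary unitary $U^{(k)}$ applied to $S$ followed by an arbitrary dephasing thermalization $\Lambda^{(k)}$ applied to $S$, so $\rho_S^{(k)}=\Lambda^{(k)}(U^{(k)}\rho_S^{(k-1)}U^{(k)\dagger})$; $p_0^{(k)}=\langle0|\rho_S^{(k)}|0\rangle$. The $\beta$-swap is the channel $\Lambda_\beta(\rho)=\sigma_-\rho\sigma_++e^{-\beta E}\sigma_+\rho\sigma_-+(1-e^{-\beta E})\sigma_-\sigma_+\rho\sigma_-\sigma_+$ with $\sigma_+=|1\rangle\langle0|$, $\sigma_-=|0\rangle\langle 1|$;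 it satisfies $\langle0|\Lambda_\beta(|1\rangle\langle1|)|0\rangle=1$ and $\langle1|\Lambda_\beta(|0\rangle\langle0|)|1\rangle=e^{-\beta E}$. *)

(* Defs.v *)
From HB Require Import structures.
From mathcomp Require Import all_boot all_order all_algebra.
From mathcomp Require Import complex.
From mathcomp Require Import all_classical all_reals all_analysis.
Set Implicit Arguments. Unset Strict Implicit. Unset Printing Implicit Defensive.
Import Order.TTheory GRing.Theory Num.Theory.
Local Open Scope ring_scope.
Local Open Scope complex_scope.

Section Qubit.
Variable R : realType.
Local Notation C := R[i].
Local Notation M2 := 'M[C]_2.

(* basis indices |0> (ground) and |1> (excited) *)
Definition i0 : 'I_2 := ord0.
Definition i1 : 'I_2 := ord_max.

Definition mxadj m n (A : 'M[C]_(m, n)) : 'M[C]_(n, m) := (map_mx conjc A)^T.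

Definition unitary (U : M2) : Prop := U *m mxadj U = 1%:M.

Definition psd (A : M2) : Prop :=
  mxadj A = A /\
  forall v : 'cV[C]_2,
    complex.Im ((mxadj v *m A *m v) ord0 ord0) = 0 /\ 0 <= complex.Re ((mxadj v *m A *m v) ord0 ord0).

Definition density (rho : M2) : Prop := psd rho /\ \tr rho = 1.

Definition channel (L : M2 -> M2) : Prop :=
  exists (n : nat) (K : 'I_n -> M2),
    \sum_(j < n) mxadj (K j) *m K j = 1%:M /\
    forall rho, L rho = \sum_(j < n) K j *m rho *m mxadj (K j).

(* Gibbs state of H_S = E |1><1| at inverse temperature beta *)
Definition gibbs (beta E : R) : M2 :=
  let Z := 1 + expR (- (beta * E)) in
  \matrix_(i, j) (if i == j then (if i == i0 then (1 / Z)%:C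
                                  else (expR (- (beta * E)) / Z)%:C)
                  else 0).

Definition dephasing_thermalization (beta E : R) (L : M2 -> M2) : Prop :=
  [/\ channel L, L (gibbs beta E) = gibbs beta E
    & forall rho, density rho -> L rho i0 i1 = 0].

(* Protocol in P_emptyset: round k (k >= 1) applies U (k) and then L (k). *)
Fixpoint evolve (U : nat -> M2) (L : nat -> M2 -> M2) (rho0 : M2) (k : nat) : M2 :=
  match k with
  | 0 => rho0
  | k'.+1 => L k (U k *m evolve U L rho0 k' *m mxadj (U k))
  end.

Definition p0 (rho : M2) : R := complex.Re (rho i0 i0).

Definition pauliX : M2 := \matrix_(i, j) (if i == j then 0 else 1).

Definition sigma_plus : M2 := delta_mx i1 i0.
Definition sigma_minus : M2 := delta_mx i0 i1.

Definition beta_swap (beta E : R) (rho : M2) : M2 :=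
  sigma_minus *m rho *m sigma_plus
  + (expR (- (beta * E)))%:C *: (sigma_plus *m rho *m sigma_minus)
  + (1 - expR (- (beta * E)))%:C *:
      (sigma_minus *m sigma_plus *m rho *m (sigma_minus *m sigma_plus)).

End Qubit.

(* Main.v *)
Require Import Defs.
From HB Require Import structures.
From mathcomp Require Import all_boot all_order all_algebra.
From mathcomp Require Import complex.
From mathcomp Require Import all_classical all_reals all_analysis.
From mathcomp Require Import ring lra.
Import Order.TTheory GRing.Theory Num.Theory.
Import numFieldNormedType.Exports.
Local Open Scope ring_scope.
Local Open Scope complex_scope.

Section Aux.
Variable R : realType.
Local Notation C := R[i].
Local Notation M2 := 'M[C]_2.

Lemma mxadjM m n p (A : 'M[C]_(m, n)) (B : 'M[C]_(n, p)) :
  mxadj (A *m B) = mxadj B *m mxadj A.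
Proof. by rewrite /mxadj map_mxM trmx_mul. Qed.

Lemma mxadjK m n (A : 'M[C]_(m, n)) : mxadj (mxadj A) = A.
Proof. by apply/matrixP => i j; rewrite !mxE conjcK. Qed.

Lemma mxadjD m n (A B : 'M[C]_(m, n)) : mxadj (A + B) = mxadj A + mxadj B.
Proof. by apply/matrixP => i j; rewrite !mxE rmorphD. Qed.

Lemma mxadjN m n (A : 'M[C]_(m, n)) : mxadj (- A) = - mxadj A.
Proof. by apply/matrixP => i j; rewrite !mxE rmorphN. Qed.

Lemma mxadjZ m n (c : C) (A : 'M[C]_(m, n)) : mxadj (c *: A) = conjc c *: mxadj A.
Proof. by apply/matrixP => i j; rewrite !mxE rmorphM. Qed.

Lemma mxadj_scalar n (c : C) : mxadj (c%:M : 'M[C]_n) = (conjc c)%:M.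
Proof. by apply/matrixP => i j; rewrite !mxE rmorphMn eq_sym. Qed.

Lemma mxadj_delta m n (i : 'I_m) (j : 'I_n) : mxadj (delta_mx i j : 'M[C]_(m, n)) = delta_mx j i.
Proof. by apply/matrixP => a b; rewrite !mxE rmorph_nat andbC. Qed.

Definition psdC (A : M2) : Prop :=
  mxadj A = A /\ forall v : 'cV[C]_2, 0 <= (mxadj v *m A *m v) ord0 ord0.

Lemma psdCE A : psd A <-> psdC A.
Proof.
split=> [[h1 h2]|[h1 h2]]; split=> // v.
  have [h3 h4] := h2 v; rewrite lecE /= h3 eqxx /=; done.
have := h2 v; rewrite lecE => /andP[/eqP h3 h4]; by split=> //; rewrite -h3.
Qed.

Definition dg (a b : C) : M2 :=
  \matrix_(i, j) (if i == j then (if i == i0 then a else b) else 0).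

Lemma ord2 (i : 'I_2) : i = i0 \/ i = i1.
Proof. case: i => [[|[|//]]] H; [left|right]; exact: val_inj. Qed.

Lemma mx2P (A B : M2) : A i0 i0 = B i0 i0 -> A i0 i1 = B i0 i1 ->
  A i1 i0 = B i1 i0 -> A i1 i1 = B i1 i1 -> A = B.
Proof.
move=> h00 h01 h10 h11; apply/matrixP => i j.
by case: (ord2 i) => ->; case: (ord2 j) => ->.
Qed.
Lemma dgE a b : dg a b = a *: delta_mx i0 i0 + b *: delta_mx i1 i1.
Proof. by apply: mx2P; rewrite !mxE /= ?mulr1 ?mulr0 ?addr0 ?add0r. Qed.

Lemma mulmx2 m p (A : 'M[C]_(m, 2)) (B : 'M[C]_(2, p)) i j :
  (A *m B) i j = A i i0 * B i0 j + A i i1 * B i1 j.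
Proof.
rewrite mxE !big_ord_recl big_ord0 addr0.
by have -> : lift ord0 ord0 = i1 :> 'I_2 by apply: val_inj.
Qed.

Lemma psdC_add A B : psdC A -> psdC B -> psdC (A + B).
Proof.
move=> [h1 h2] [h3 h4]; split; first by rewrite mxadjD h1 h3.
by move=> v; rewrite mulmxDr mulmxDl mxE addr_ge0.
Qed.

Lemma psdC0 : psdC 0.
Proof.
split; first by apply/matrixP => i j; rewrite !mxE rmorph0.
by move=> v; rewrite mulmx0 mul0mx mxE.
Qed.

Lemma psdC_sum n (F : 'I_n -> M2) : (forall j, psdC (F j)) -> psdC (\sum_(j < n) F j).
Proof.
move=> h; apply: (big_ind psdC) => //; [exact: psdC0 | exact: psdC_add].
Qed.

Lemma conj_ge0_id (c : C) : 0 <= c -> conjc c = c.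
Proof.
case: c => a b; rewrite lecE /= => /andP[/eqP hb _].
by rewrite /= hb oppr0.
Qed.

Lemma psdC_scale (c : C) A : 0 <= c -> psdC A -> psdC (c *: A).
Proof.
move=> hc [h1 h2]; split.
  by rewrite mxadjZ conj_ge0_id // h1.
by move=> v; rewrite -scalemxAr -scalemxAl mxE mulr_ge0.
Qed.

Lemma psdC_conj A B : psdC A -> psdC (B *m A *m mxadj B).
Proof.
move=> [h1 h2]; split; first by rewrite !mxadjM mxadjK h1 mulmxA.
move=> v; have := h2 (mxadj B *m v).
by rewrite mxadjM mxadjK !mulmxA.
Qed.

Lemma psdC_ii A i : psdC A -> 0 <= A i i.
Proof.
move=> [_ h]; have := h (delta_mx i ord0).
by rewrite mxadj_delta -rowE -colE !mxE.
Qed.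

Lemma psdC_herm A i j : psdC A -> A j i = conjc (A i j).
Proof. by move=> [h _]; rewrite -{1}h !mxE. Qed.

Lemma psdC_delta i : psdC (delta_mx i i).
Proof.
split; first by rewrite mxadj_delta.
move=> v; rewrite -[delta_mx i i](@mul_delta_mx C 2 1 2 ord0 i i) !mulmxA -mulmxA.
rewrite mxE big_ord1 -(@mxadj_delta 1 2 ord0 i) -mxadjM.
set w := (delta_mx ord0 i *m v).
rewrite mxE mulrC !mxE; exact: mulcJ_ge0.
Qed.

Lemma psdC_dg (a b : R) : 0 <= a -> 0 <= b -> psdC (dg a%:C b%:C).
Proof.
move=> ha hb; rewrite dgE; apply: psdC_add; apply: psdC_scale; rewrite ?ler0c //; exact: psdC_delta.
Qed.



Lemma ReD (x y : C) : complex.Re (x + y) = complex.Re x + complex.Re y.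
Proof. by case: x => ? ?; case: y => ? ? /=. Qed.
Lemma ReB (x y : C) : complex.Re (x - y) = complex.Re x - complex.Re y.
Proof. by case: x => ? ?; case: y => ? ? /=. Qed.
Lemma ReM_real (x : R) (z : C) : complex.Re (x%:C * z) = x * complex.Re z.
Proof. by case: z => a b /=; rewrite mul0r subr0. Qed.

Lemma geC0 (z : C) : 0 <= z -> complex.Im z = 0 /\ 0 <= complex.Re z.
Proof. by rewrite lecE /= => /andP[/eqP h1 h2]. Qed.

Lemma realC (z : C) : complex.Im z = 0 -> z = (complex.Re z)%:C.
Proof. by case: z => a b /= ->. Qed.

Lemma tr2 (A : M2) : \tr A = A i0 i0 + A i1 i1.
Proof.
rewrite /mxtrace !big_ord_recl big_ord0 addr0.
by have -> : lift ord0 ord0 = i1 :> 'I_2 by apply: val_inj.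
Qed.

Section Chan.
Variable L : M2 -> M2.
Hypothesis hL : channel L.

Lemma chan_add A B : L (A + B) = L A + L B.
Proof.
case: hL => n [K [_ hK]]; rewrite !hK -big_split; apply: eq_bigr => j _.
by rewrite mulmxDr mulmxDl.
Qed.

Lemma chan_sub A B : L (A - B) = L A - L B.
Proof.
case: hL => n [K [_ hK]]; rewrite !hK -sumrB; apply: eq_bigr => j _.
by rewrite mulmxBr mulmxBl.
Qed.

Lemma chan_scale c A : L (c *: A) = c *: L A.
Proof.
case: hL => n [K [_ hK]]; rewrite !hK scaler_sumr; apply: eq_bigr => j _.
by rewrite -scalemxAr -scalemxAl.
Qed.

Lemma chan_psd A : psdC A -> psdC (L A).
Proof.
move=> hA; case: hL => n [K [_ hK]]; rewrite hK; apply: psdC_sum => j.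
exact: psdC_conj.
Qed.

Lemma chan_tr A : \tr (L A) = \tr A.
Proof.
case: hL => n [K [hs hK]]; rewrite hK raddf_sum.
transitivity (\sum_(j < n) \tr (mxadj (K j) *m K j *m A)).
  by apply: eq_bigr => j _; rewrite /= mxtrace_mulC mulmxA.
by rewrite -raddf_sum -mulmx_suml hs mul1mx.
Qed.
End Chan.


Lemma lin_dens_psd rho : density rho -> psdC rho /\ \tr rho = 1.
Proof. by case=> /psdCE. Qed.

Lemma unit_step (U s : M2) (q : R) : unitary U -> density s ->
  psdC (s - (q%:C)%:M) -> psdC (((1 - q)%:C)%:M - s) ->
  [/\ density (U *m s *m mxadj U), psdC (U *m s *m mxadj U - (q%:C)%:M)
    & psdC (((1 - q)%:C)%:M - U *m s *m mxadj U)].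
Proof.
move=> hU /lin_dens_psd [hs htr] hlo hhi.
have hsc c : U *m (c%:M : M2) *m mxadj U = c%:M.
  by rewrite mul_mx_scalar -scalemxAl hU scalemx1.
split.
- split; first by apply/psdCE; exact: psdC_conj.
  by rewrite mxtrace_mulC mulmxA (mulmx1C hU) mul1mx.
- by rewrite -(hsc (q%:C)) -mulmxBl -mulmxBr; exact: psdC_conj.
- by rewrite -{1}(hsc ((1 - q)%:C)) -mulmxBl -mulmxBr; exact: psdC_conj.
Qed.


Lemma gibbs_dg beta E : gibbs beta E =
  dg (1 / (1 + expR (- (beta * E))))%:C
     (expR (- (beta * E)) / (1 + expR (- (beta * E))))%:C.
Proof. by []. Qed.

Lemma chan_step (beta E : R) (L : M2 -> M2) (s : M2) (q : R) :
  0 < beta * E -> dephasing_thermalization beta E L -> 0 <= q <= 1 -> density s ->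
  psdC (s - (q%:C)%:M) -> psdC (((1 - q)%:C)%:M - s) ->
  exists b : R, L s = dg (1 - b)%:C b%:C /\
     q * expR (- (beta * E)) <= b /\ b <= 1 - q.
Proof.
move=> hbE [hch hfix hdeph] /andP[hq0 hq1] hden hlo hhi.
case/lin_dens_psd: (hden) => hs htr.
set e := expR (- (beta * E)).
have he0 : 0 < e := expR_gt0 _.
have he1 : e < 1 by rewrite expR_lt1 oppr_lt0.
set Z := 1 + e.
have hZ : Z != 0 by rewrite /Z; apply/negP => /eqP h; lra.
have he : e != 0 by apply/negP => /eqP h; lra.
have hfix' : L (dg (1 / Z)%:C (e / Z)%:C) = dg (1 / Z)%:C (e / Z)%:C.
  by rewrite -gibbs_dg.
have E1 : (1%:M : M2) = Z%:C *: dg (1 / Z)%:C (e / Z)%:C + (1 - e)%:C *: dg 0%:C 1%:C.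
  apply: mx2P; rewrite !mxE /=; apply/eqP; rewrite eq_complex /=;
  apply/andP; split; apply/eqP; field; done.
have E2 : (1%:M : M2) = (Z / e)%:C *: dg (1 / Z)%:C (e / Z)%:C + (1 - 1 / e)%:C *: dg 1%:C 0%:C.
  apply: mx2P; rewrite !mxE /=; apply/eqP; rewrite eq_complex /=;
  apply/andP; split; apply/eqP; field; by rewrite ?hZ ?he.
have hx1 := geC0 _ (psdC_ii _ i1 (chan_psd _ hch _ (psdC_dg _ _ (lexx 0) ler01))).
have hx2 := geC0 _ (psdC_ii _ i1 (chan_psd _ hch _ (psdC_dg _ _ ler01 (lexx 0)))).
have hr1 : e <= complex.Re (L 1%:M i1 i1).
  rewrite {1}E1 (chan_add _ hch) !(chan_scale _ hch) hfix' !mxE ReD !ReM_real /=.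
  have -> : Z * (e / Z) = e by field.
  case: hx1 => _ hx1; nra.
have hr2 : complex.Re (L 1%:M i1 i1) <= 1.
  rewrite {1}E2 (chan_add _ hch) !(chan_scale _ hch) hfix' !mxE ReD !ReM_real /=.
  have -> : Z / e * (e / Z) = 1 by field; rewrite hZ he.
  have h1e : 1 - 1 / e <= 0.
    rewrite subr_le0 ler_pdivlMr // mul1r; lra.
  case: hx2 => _ hx2; nra.
have Eq c : ((c%:C)%:M : M2) = c%:C *: 1%:M by rewrite scalemx1.
set b := complex.Re (L s i1 i1).
have hlo' : q * e <= b.
  rewrite /b -(subrK ((q%:C)%:M) s) (chan_add _ hch) {2}Eq (chan_scale _ hch) !mxE ReD ReM_real.
  case: (geC0 _ (psdC_ii _ i1 (chan_psd _ hch _ hlo))) => _ h; nra.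
have hhi' : b <= 1 - q.
  rewrite /b; have -> : s = ((1 - q)%:C)%:M - (((1 - q)%:C)%:M - s) by rewrite opprB addrC subrK.
  rewrite (chan_sub _ hch) {1}Eq (chan_scale _ hch) !mxE ReB ReM_real.
  case: (geC0 _ (psdC_ii _ i1 (chan_psd _ hch _ hhi))) => _ h; nra.
have hLs := chan_psd _ hch _ hs.
have h11 : L s i1 i1 = b%:C.
  by apply: realC; case: (geC0 _ (psdC_ii _ i1 hLs)).
have htr' : L s i0 i0 + L s i1 i1 = 1 by rewrite -tr2 chan_tr.
have h01 : L s i0 i1 = 0 by apply: hdeph.
have h10 : L s i1 i0 = 0 by rewrite (psdC_herm _ i0 i1 hLs) h01 rmorph0.
exists b; split; last by split.
apply: mx2P; rewrite !mxE /= ?h01 ?h10 ?h11 //.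
have h00 : L s i0 i0 = 1 - L s i1 i1 by rewrite -htr' addrK.
rewrite h00 h11; apply/eqP; rewrite eq_complex /=.
by rewrite !subr0 !eqxx.
Qed.


Lemma lift0i1 : lift ord0 ord0 = i1 :> 'I_2.
Proof. exact: val_inj. Qed.

Lemma bsE (beta E : R) (rho : M2) :
  let e := expR (- (beta * E)) in
  beta_swap beta E rho = dg (rho i1 i1 + (1 - e)%:C * rho i0 i0) (e%:C * rho i0 i0).
Proof.
move=> e; apply: mx2P; rewrite /beta_swap /sigma_plus /sigma_minus;
  rewrite ?(mxE, big_ord_recl, big_ord0) /= ?lift0i1 /e /i0; ring.
Qed.


Lemma conjC_real (x : R) : conjc (x%:C) = x%:C.
Proof. by apply/eqP; rewrite eq_complex /= oppr0 !eqxx. Qed.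

Lemma krausZ1 (x : R) (M A : M2) :
  (x%:C *: M) *m A *m mxadj (x%:C *: M) = (x ^+ 2)%:C *: (M *m A *m mxadj M).
Proof.
by rewrite mxadjZ conjC_real -!scalemxAl -!scalemxAr scalerA -rmorphM expr2.
Qed.

Lemma krausZ2 (x : R) (M : M2) :
  mxadj (x%:C *: M) *m (x%:C *: M) = (x ^+ 2)%:C *: (mxadj M *m M).
Proof.
by rewrite mxadjZ conjC_real -!scalemxAl -!scalemxAr scalerA -rmorphM expr2.
Qed.

End Aux.


Section T.
Variable R : realType.
Local Notation C := R[i].
Local Notation M2 := 'M[C]_2.
Lemma krausC2 (c : C) (M : M2) :
  mxadj (c *: M) *m (c *: M) = (conjc c * c) *: (mxadj M *m M).
Proof. by rewrite mxadjZ -!scalemxAl -!scalemxAr scalerA mulrC. Qed.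

Lemma kraus_gen (A B : M2) (s1 s2 e1 e2 : C) :
  mxadj A = B -> mxadj B = A -> A *m B *m (A *m B) = A *m B ->
  B *m A + A *m B = 1%:M -> conjc s1 * s1 = e1 -> conjc s2 * s2 = e2 -> e1 + e2 = 1 ->
  (mxadj A *m A + (mxadj (s1 *: B) *m (s1 *: B) +
     (mxadj (s2 *: (A *m B)) *m (s2 *: (A *m B)) + 0)) = 1%:M)
  /\ forall rho, A *m rho *m B + e1 *: (B *m rho *m A) + e2 *: (A *m B *m rho *m (A *m B))
     = A *m rho *m mxadj A + (s1 *: B *m rho *m mxadj (s1 *: B) +
        (s2 *: (A *m B) *m rho *m mxadj (s2 *: (A *m B)) + 0)).
Proof.
move=> hA hB hP hS h1 h2 h12.
have hAB : mxadj (A *m B) = A *m B by rewrite mxadjM hA hB.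
split.
  rewrite !krausC2 h1 h2 hA hB hAB hP addr0 -scalerDl h12 scale1r.
  exact: hS.
move=> rho; rewrite !mxadjZ !mxadjM hA hB addr0 addrA.
rewrite -!scalemxAl -!scalemxAr !scalerA !mulmxA.
congr (_ + _ *: _ + _ *: _); [rewrite -h1 | rewrite -h2]; exact: mulrC.
Qed.

Lemma bs_deph (beta E : R) : 0 < beta * E ->
  dephasing_thermalization beta E (beta_swap beta E).
Proof.
move=> hbE.
set e := expR (- (beta * E)).
have he0 : 0 < e := expR_gt0 _.
have he1 : e < 1 by rewrite expR_lt1 oppr_lt0.
split.
- pose K (j : 'I_3) : M2 := if val j == 0%N then sigma_minus R
    else if val j == 1%N then (Num.sqrt e)%:C *: sigma_plus R
    else (Num.sqrt (1 - e))%:C *: (sigma_minus R *m sigma_plus R).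
  have hs1 : Num.sqrt e ^+ 2 = e by rewrite sqr_sqrtr // ltW.
  have hs2 : Num.sqrt (1 - e) ^+ 2 = 1 - e by rewrite sqr_sqrtr // subr_ge0 ltW.
  have hsm : mxadj (sigma_minus R) = sigma_plus R.
    by rewrite /sigma_minus /sigma_plus mxadj_delta.
  have hsp : mxadj (sigma_plus R) = sigma_minus R.
    by rewrite /sigma_minus /sigma_plus mxadj_delta.
  have hidem : sigma_minus R *m sigma_plus R *m (sigma_minus R *m sigma_plus R)
      = sigma_minus R *m sigma_plus R.
    apply: mx2P; rewrite /sigma_plus /sigma_minus;
    by rewrite ?(mxE, big_ord_recl, big_ord0) /= ?lift0i1 /i0; ring.
  have hsum : sigma_plus R *m sigma_minus R + sigma_minus R *m sigma_plus R = 1%:M.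
    apply: mx2P; rewrite /sigma_plus /sigma_minus;
    by rewrite ?(mxE, big_ord_recl, big_ord0) /= ?lift0i1 /i0; ring.
  have hq1 : conjc (Num.sqrt e)%:C * (Num.sqrt e)%:C = e%:C.
    by rewrite conjC_real -rmorphM -expr2 hs1.
  have hq2 : conjc (Num.sqrt (1 - e))%:C * (Num.sqrt (1 - e))%:C = (1 - e)%:C.
    by rewrite conjC_real -rmorphM -expr2 hs2.
  have hee : e%:C + (1 - e)%:C = 1 :> C by rewrite -rmorphD addrC subrK rmorph1.
  exists 3, K; split.
  + rewrite !big_ord_recl big_ord0 /K /=.
    by case: (kraus_gen _ _ _ _ _ _ hsm hsp hidem hsum hq1 hq2 hee).

  + move=> rho; rewrite !big_ord_recl big_ord0 /K /= /beta_swap.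
    by case: (kraus_gen _ _ _ _ _ _ hsm hsp hidem hsum hq1 hq2 hee) => _ ->.
- rewrite bsE gibbs_dg; apply: mx2P; rewrite !mxE /=; apply/eqP; rewrite eq_complex /=;
  apply/andP; split; apply/eqP; field; try done; apply/negP => /eqP h; have := expR_gt0 (- (beta * E)); lra.
- by move=> rho _; rewrite bsE mxE.
Qed.

End T.


Section T2.
Variable R : realType.
Local Notation C := R[i].
Local Notation M2 := 'M[C]_2.
Local Notation dg := (@dg R).
Local Notation psdC := (@psdC R).

Lemma mxadjX : mxadj (pauliX R) = pauliX R.
Proof.
apply/matrixP => i j; rewrite !mxE eq_sym; case: (i == j); [exact: rmorph0 | exact: rmorph1].
Qed.

Lemma pauliX_unitary : unitary (pauliX R).
Proof.
rewrite /unitary mxadjX; apply: mx2P; rewrite /pauliX;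
by rewrite ?(mxE, big_ord_recl, big_ord0) /= ?lift0i1 /i0; ring.
Qed.

Lemma X_dg (a b : C) : pauliX R *m dg a b *m mxadj (pauliX R) = dg b a.
Proof.
rewrite mxadjX; apply: mx2P; rewrite /pauliX;
by rewrite ?(mxE, big_ord_recl, big_ord0) /= ?lift0i1 /i0; ring.
Qed.

Lemma opt_traj (beta E r : R) (rho0 : M2) :
  rho0 = dg (1 - r)%:C r%:C -> forall k,
  evolve (fun _ => pauliX R) (fun _ => beta_swap beta E) rho0 k
  = dg (1 - expR (- (beta * E)) ^+ k * r)%:C (expR (- (beta * E)) ^+ k * r)%:C.
Proof.
move=> h0; elim=> [|k IH] /=.
  by rewrite h0 expr0 !mul1r.
rewrite IH X_dg bsE; apply: mx2P; rewrite !mxE /=; apply/eqP; rewrite eq_complex /=;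
  apply/andP; split; apply/eqP; rewrite ?exprS; ring.
Qed.


Lemma dg_density (b : R) : 0 <= b <= 1 -> density (dg (1 - b)%:C b%:C).
Proof.
move=> /andP[hb0 hb1]; split.
  by apply/psdCE; apply: psdC_dg; lra.
rewrite tr2 !mxE /= -rmorphD subrK; exact: rmorph1.
Qed.

Lemma dg_lo (a b c : R) : dg a%:C b%:C - (c%:C)%:M = dg (a - c)%:C (b - c)%:C.
Proof.
apply: mx2P; rewrite !mxE /=; apply/eqP; rewrite eq_complex /=;
  apply/andP; split; apply/eqP; ring.
Qed.

Lemma dg_hi (a b c : R) : (c%:C)%:M - dg a%:C b%:C = dg (c - a)%:C (c - b)%:C.
Proof.
apply: mx2P; rewrite !mxE /=; apply/eqP; rewrite eq_complex /=;
  apply/andP; split; apply/eqP; ring.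
Qed.

Lemma invariant (beta E : R) (U : nat -> M2) (L : nat -> M2 -> M2) (rho0 : M2) (r : R) :
  0 < beta * E -> (forall k, unitary (U k)) ->
  (forall k, dephasing_thermalization beta E (L k)) -> density rho0 -> 0 <= r <= 1 ->
  psdC (rho0 - (r%:C)%:M) -> psdC (((1 - r)%:C)%:M - rho0) ->
  forall k, density (evolve U L rho0 k) /\
    psdC (evolve U L rho0 k - (((expR (- (beta * E)) ^+ k * r))%:C)%:M) /\
    psdC (((1 - expR (- (beta * E)) ^+ k * r)%:C)%:M - evolve U L rho0 k).
Proof.
move=> hbE hU hL hd /andP[hr0 hr1] hlo hhi.
have he0 : 0 < expR (- (beta * E)) := expR_gt0 _.
have he1 : expR (- (beta * E)) < 1 by rewrite expR_lt1 oppr_lt0.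
elim=> [|k IH] /=.
  by rewrite expr0 mul1r.
case: IH => hd' [hlo' hhi'].
have hek0 : 0 <= expR (- (beta * E)) ^+ k by apply: exprn_ge0; exact: ltW.
have hek1 : expR (- (beta * E)) ^+ k <= 1 by apply: exprn_ile1; exact: ltW.
have hq : 0 <= expR (- (beta * E)) ^+ k * r <= 1 by apply/andP; split; nra.
case: (@unit_step R _ _ _ (hU k.+1) hd' hlo' hhi') => hd2 hlo2 hhi2.
case: (@chan_step R _ _ _ _ _ hbE (hL k.+1) hq hd2 hlo2 hhi2) => b [-> [hb1 hb2]].
rewrite exprS.
split; first by apply: dg_density; apply/andP; split; nra.
split.
  by rewrite dg_lo; apply: psdC_dg; nra.
by rewrite dg_hi; apply: psdC_dg; nra.
Qed.

End T2.

Local Open Scope classical_set_scope.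

Theorem corollary1 (R : realType) (E beta : R) (hE : 0 < E) (hbeta : 0 < beta)
  (rho0 : 'M[R[i]]_2) (hrho : density rho0)
  (hdiag : rho0 i0 i1 = 0 /\ rho0 i1 i0 = 0)
  (hpop : complex.Re (rho0 i1 i1) <= complex.Re (rho0 i0 i0)) :
  let Uopt := fun _ : nat => pauliX R in
  let Lopt := fun _ : nat => beta_swap beta E in
  [/\ unitary (pauliX R),
      dephasing_thermalization beta E (beta_swap beta E),
      (forall (U : nat -> 'M[R[i]]_2) (L : nat -> 'M[R[i]]_2 -> 'M[R[i]]_2),
          (forall k, unitary (U k)) ->
          (forall k, dephasing_thermalization beta E (L k)) ->
          forall k, p0 (evolve U L rho0 k) <= p0 (evolve Uopt Lopt rho0 k)),
      (forall k : nat, p0 (evolve Uopt Lopt rho0 k)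
                       = 1 - expR (- (k%:R * beta * E)) * (1 - p0 rho0))
    & (fun k => p0 (evolve Uopt Lopt rho0 k)) @ \oo --> (1 : R)].
Proof.
move=> Uopt Lopt.
have hbE : 0 < beta * E by apply: mulr_gt0.
set e := expR (- (beta * E)).
have he0 : 0 < e := expR_gt0 _.
have he1 : e < 1 by rewrite expR_lt1 oppr_lt0.
case: (hrho) => /psdCE hps htr.
set r := complex.Re (rho0 i1 i1).
set a := complex.Re (rho0 i0 i0).
have h00 : rho0 i0 i0 = a%:C by apply: realC; case: (geC0 _ _ (@psdC_ii R _ i0 hps)).
have h11 : rho0 i1 i1 = r%:C by apply: realC; case: (geC0 _ _ (@psdC_ii R _ i1 hps)).
have hr0 : 0 <= r by case: (geC0 _ _ (@psdC_ii R _ i1 hps)).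
have har : a + r = 1.
  have := congr1 (@complex.Re R) htr; rewrite tr2 ReD => ->; done.
have hrho0 : rho0 = @dg R (1 - r)%:C r%:C.
  case: hdiag => h01 h10.
  apply: mx2P; rewrite !mxE /= ?h01 ?h10 ?h11 //.
  by rewrite h00; congr (_%:C); lra.
have hopt k : evolve Uopt Lopt rho0 k = @dg R (1 - e ^+ k * r)%:C (e ^+ k * r)%:C.
  exact: opt_traj.
have hp k : p0 (evolve Uopt Lopt rho0 k) = 1 - e ^+ k * r.
  by rewrite hopt /p0 mxE.
split.
- exact: pauliX_unitary.
- exact: bs_deph.
- move=> U L hU hL k; rewrite hp.
  have hlo : psdC R (rho0 - (r%:C)%:M).
    rewrite hrho0 dg_lo; apply: psdC_dg; lra.
  have hhi : psdC R (((1 - r)%:C)%:M - rho0).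
    rewrite hrho0 dg_hi; apply: psdC_dg; lra.
  have hr1 : 0 <= r <= 1 by apply/andP; split; lra.
  case: (@invariant R _ _ _ _ _ _ hbE hU hL hrho hr1 hlo hhi k) => _ [_ h].
  case: (geC0 _ _ (@psdC_ii R _ i0 h)) => _.
  by rewrite !mxE /= ReB -/e subr_ge0.
- move=> k; rewrite hp /p0 h00 /=.
  have -> : - (k%:R * beta * E) = k%:R * (- (beta * E)) by ring.
  by rewrite expRM_natl -/e; have -> : 1 - a = r by lra.
- have hfun : (fun k => p0 (evolve Uopt Lopt rho0 k)) = (fun k => 1 - e ^+ k * r).
    by apply: funext => k; rewrite hp.
  rewrite hfun.
  have hc : (fun k : nat => e ^+ k) @ \oo --> (0 : R).
    by apply: cvg_expr; rewrite ger0_norm ?ltW.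
  have h2 : (fun k : nat => e ^+ k * r) @ \oo --> 0 * r := @cvgMr_tmp _ _ _ _ _ _ r hc.
  have := cvgB (cvg_cst (1 : R)) (h2 _).
  rewrite mul0r subr0 => h; apply: h; exact: eventually_filter.
Qed.
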